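(* Let $q\ge1$ be an integer such that $b^q\ge 2$ and suppose that $E(q,x)\ne\mathcal{A}^q\times\mathcal{A}^q$ for every $x\in[0,1)$. Then $\sigma(q)\le b^q-2+2/\alpha$, where $\alpha=\alpha(b,q)>1$ satisfies $2-\alpha=(b^q-2)\alpha(\alpha-1)$.
   Context: Standing setup: $b\ge2$ integer, $\mathcal{A}=\{0,\dots,b-1\}$, $\gamma\in(1/b,1)$, $\psi$ a $\mathbb{Z}$-periodic $C^1$ function. $S(x,\mathbf{i})=\sum_{n\ge1}\gamma^{n-1}\psi\big(\frac{x+i_1+i_2b+\cdots+i_nb^{n-1}}{b^n}\big)$, $S'=\partial_xS$. For $\mathbf{u}\in\mathcal{A}^q$, $x(\mathbf{u})=(x+u_1+u_2b+\cdots+u_qb^{q-1})/b^q$. Sequences $\mathbf{i},\mathbf{j}$ are $(\varepsilon,\delta)$-tangent at $x_0$ if $|S(x_0,\mathbf{i})-S(x_0,\mathbf{j})|\le\varepsilon$ and $|S'(x_0,\mathbf{i})-S'(x_0,\mathbf{j})|\le\delta$. $E(q,x_0;\varepsilon,\delta)$: pairs $(\mathbf{k},\mathbf{l})\in\mathcal{A}^q\times\mathcal{A}^q$ such that some concatenations $\mathbf{ku},\mathbf{lv}$ ($\mathbf{u},\mathbf{v}\in\mathcal{A}^{\mathbb{Z}^+}$) are $(\varepsilon,\delta)$-tangent at $x_0$; $E(q,x_0)=\bigcap_{\varepsilon,\delta>0}E(q,x_0;\varepsilon,\delta)$. Weight function: measurable $\omega:[0,1)\to(0,\infty)$ with $\omega,1/\omega$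 bounded. Admissible testing function of order $q$: measurable $V:[0,1)\times\mathcal{A}^q\times\mathcal{A}^q\to[0,\infty)$ such that for some $\varepsilon,\delta>0$, $V(x,\mathbf{u},\mathbf{v})V(x,\mathbf{v},\mathbf{u})\ge1$ whenever $x\in[0,1)$ and $(\mathbf{u},\mathbf{v})\in E(q,x;\varepsilon,\delta)$. $\Sigma_{V,\omega}(x)=\sup_{\mathbf{u}}\frac{\omega(x)}{\omega(x(\mathbf{u}))}\sum_{\mathbf{v}}V(x,\mathbf{u},\mathbf{v})$; $\sigma(q)=\inf_{\omega,V}\|\Sigma_{V,\omega}\|_\infty$. *)

(* Defs.v *)
From Stdlib Require Import Reals ClassicalEpsilon.
From mathcomp Require Import all_boot.
Unset Printing Implicit Defensive.
Local Open Scope R_scope.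

Definition null_set (A : R -> Prop) : Prop :=
  forall eps, 0 < eps -> exists a c : nat -> R,
    (forall n, a n <= c n) /\
    (forall x, A x -> exists n, a n < x < c n) /\
    (forall N, sum_f_R0 (fun n => c n - a n) N <= eps).

Inductive borel : (R -> Prop) -> Prop :=
  | borel_interval : forall a c, borel (fun x => a < x < c)
  | borel_compl : forall A, borel A -> borel (fun x => ~ A x)
  | borel_union : forall An : nat -> R -> Prop,
      (forall n, borel (An n)) -> borel (fun x => exists n, An n x)
  | borel_ext : forall A B, borel A -> (forall x, A x <-> B x) -> borel B.

Definition leb_measurable (A : R -> Prop) : Prop :=
  exists B Z, borel B /\ null_set Z /\
    (forall x, (A x /\ ~ B x) \/ (B x /\ ~ A x) -> Z x).

Definition measurable01 (f : R -> R) : Prop :=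
  forall c, leb_measurable (fun x => 0 <= x < 1 /\ c < f x).

Definition esssup_le (f : R -> R) (c : R) : Prop :=
  null_set (fun x => 0 <= x < 1 /\ c < f x).

(* Value of a (convergent) series; arbitrary if it diverges. *)
Definition series (u : nat -> R) : R :=
  epsilon (inhabits 0) (fun l => infinite_sum u l).

(* Derivative of f at x (arbitrary if f is not differentiable at x). *)
Definition deriv_at (f : R -> R) (x : R) : R :=
  epsilon (inhabits 0) (fun l => derivable_pt_lim f x l).

(* Digit sequences i = (i_1, i_2, ...) in A^{Z+}, stored 0-indexed: i n = i_{n+1}. *)
Definition digit {b : nat} (d : 'I_b) : R := INR (nat_of_ord d).

Definition partial_pt (b : nat) (x : R) (i : nat -> 'I_b) (n : nat) : R :=
  x + \big[Rplus/0]_(k < n) (digit (i k) * INR b ^ k).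

(* S(x,i) = sum_{n>=1} gamma^(n-1) psi((x + i_1 + ... + i_n b^(n-1)) / b^n) *)
Definition Sf (b : nat) (gamma : R) (psi : R -> R) (x : R) (i : nat -> 'I_b) : R :=
  series (fun m => gamma ^ m * psi (partial_pt b x i (m.+1) / INR b ^ (m.+1))).

Definition Sf' (b : nat) (gamma : R) (psi : R -> R) (x : R) (i : nat -> 'I_b) : R :=
  deriv_at (fun y => Sf b gamma psi y i) x.

Definition tangent (b : nat) (gamma : R) (psi : R -> R) (x0 eps delta : R)
  (i j : nat -> 'I_b) : Prop :=
  Rabs (Sf b gamma psi x0 i - Sf b gamma psi x0 j) <= eps /\
  Rabs (Sf' b gamma psi x0 i - Sf' b gamma psi x0 j) <= delta.

(* words of length q: u = (u_1,...,u_q), stored 0-indexed *)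
Notation word b q := {ffun 'I_q -> 'I_b}.

Definition concat (b q : nat) (k : word b q) (u : nat -> 'I_b) : nat -> 'I_b :=
  fun n => match @insub nat (fun m => m < q)%N _ n with
           | Some i => k i
           | None => u (n - q)%N
           end.

Definition xu (b q : nat) (x : R) (u : word b q) : R :=
  (x + \big[Rplus/0]_(k < q) (digit (u k) * INR b ^ k)) / INR b ^ q.

Definition E_ed (b : nat) (gamma : R) (psi : R -> R) (q : nat) (x0 eps delta : R)
  (k l : word b q) : Prop :=
  exists u v : nat -> 'I_b, tangent b gamma psi x0 eps delta (concat b q k u) (concat b q l v).

Definition E (b : nat) (gamma : R) (psi : R -> R) (q : nat) (x0 : R)
  (k l : word b q) : Prop :=
  forall eps delta, 0 < eps -> 0 < delta -> E_ed b gamma psi q x0 eps delta k l.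

Definition weight (omega : R -> R) : Prop :=
  measurable01 omega /\ (forall x, 0 <= x < 1 -> 0 < omega x) /\
  exists M, forall x, 0 <= x < 1 -> omega x <= M /\ / omega x <= M.

Definition admissible (b : nat) (gamma : R) (psi : R -> R) (q : nat)
  (V : R -> word b q -> word b q -> R) : Prop :=
  (forall u v, measurable01 (fun x => V x u v)) /\
  (forall x u v, 0 <= x < 1 -> 0 <= V x u v) /\
  exists eps delta, 0 < eps /\ 0 < delta /\
    forall x u v, 0 <= x < 1 -> E_ed b gamma psi q x eps delta u v ->
      1 <= V x u v * V x v u.

(* Sigma_{V,omega}(x) = sup_u omega(x)/omega(x(u)) * sum_v V(x,u,v)
   (finite max of nonnegative terms, so max with 0 is the sup) *)
Definition Sigma (b q : nat) (V : R -> word b q -> word b q -> R) (omega : R -> R)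
  (x : R) : R :=
  \big[Rmax/0]_(u : word b q)
     (omega x / omega (xu b q x u) * \big[Rplus/0]_(v : word b q) V x u v).

(* sigma(q) <= c, sigma(q) being the infimum of ||Sigma_{V,omega}||_oo *)
Definition sigma_le (b : nat) (gamma : R) (psi : R -> R) (q : nat) (c : R) : Prop :=
  forall eta, 0 < eta -> exists (omega : R -> R) (V : R -> word b q -> word b q -> R),
    weight omega /\ admissible b gamma psi q V /\ esssup_le (Sigma b q V omega) (c + eta).

(* Main.v *)
Require Import Defs.
From Stdlib Require Import Reals.
From Stdlib Require Import Lra Lia Psatz FunctionalExtensionality ClassicalEpsilon Classical ZArith Ranalysis5 RiemannInt.
Local Open Scope R_scope.

Lemma tail_inv (a : nat -> R) K g : 0 <= g < 1 ->
  (forall m, Rabs (a m) <= K * g^m) -> forall n N,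
  Rabs (sum_f_R0 a (N + n) - sum_f_R0 a n) <= K * g^(S n) * (1 - g^N) / (1 - g).
Proof.
  intros Hg Ha n N. assert (HK : 0 <= K).
  { specialize (Ha 0%nat). simpl in Ha. pose proof (Rabs_pos (a 0%nat)). lra. }
  induction N as [|N IH].
  - simpl. replace (sum_f_R0 a n - sum_f_R0 a n) with 0 by ring.
    rewrite Rabs_R0. unfold Rdiv. replace (1-1) with 0 by ring. lra.
  - replace (S N + n)%nat with (S (N + n)) by lia. simpl sum_f_R0.
    replace (sum_f_R0 a (N + n) + a (S (N + n)) - sum_f_R0 a n) with
      ((sum_f_R0 a (N + n) - sum_f_R0 a n) + a (S (N + n))) by ring.
    eapply Rle_trans; [apply Rabs_triang|].
    pose proof (Ha (S (N+n))) as H1.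
    replace (g ^ S (N + n)) with (g ^ S n * g ^ N) in H1
      by (rewrite <- pow_add; f_equal; lia).
    assert (Hp : 0 < 1 - g) by lra.
    replace (K * g ^ S n * (1 - g ^ S N) / (1 - g)) with
      (K * g ^ S n * (1 - g ^ N) / (1 - g) + K * (g ^ S n * g ^ N))
      by (simpl; field; lra).
    lra.
Qed.

Lemma tail_bound (a : nat -> R) K g : 0 <= g < 1 ->
  (forall m, Rabs (a m) <= K * g^m) -> forall n N,
  Rabs (sum_f_R0 a (N + n) - sum_f_R0 a n) <= K * g^(S n) / (1 - g).
Proof.
  intros Hg Ha n N. eapply Rle_trans; [apply (tail_inv a K g Hg Ha)|].
  assert (HK : 0 <= K).
  { specialize (Ha 0%nat). simpl in Ha. pose proof (Rabs_pos (a 0%nat)). lra. }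
  assert (0 <= g ^ N) by (apply pow_le; lra).
  assert (0 <= g ^ S n) by (apply pow_le; lra).
  unfold Rdiv. apply Rmult_le_compat_r. { left; apply Rinv_0_lt_compat; lra. }
  assert (0 <= K * g ^ S n) by (apply Rmult_le_pos; lra). nra.
Qed.

Lemma small_pow g eps : 0 <= g < 1 -> 0 < eps -> exists N, forall n, (N <= n)%nat -> g ^ n < eps.
Proof.
  intros Hg He. destruct (pow_lt_1_zero g ltac:(rewrite Rabs_right; lra) eps He) as [N HN].
  exists N. intros n Hn. specialize (HN n Hn). rewrite Rabs_right in HN; auto.
  apply Rle_ge, pow_le; lra.
Qed.

Lemma geom_cv (a : nat -> R) K g : 0 <= g < 1 ->
  (forall m, Rabs (a m) <= K * g^m) -> exists l, Un_cv (sum_f_R0 a) l.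
Proof.
  intros Hg Ha.
  assert (HK : 0 <= K).
  { specialize (Ha 0%nat). simpl in Ha. pose proof (Rabs_pos (a 0%nat)). lra. }
  assert (Hc : Cauchy_crit (sum_f_R0 a)).
  { intros eps He.
    destruct (small_pow g (eps * (1 - g) / (2 * (K + 1))) Hg) as [N HN].
    { apply Rdiv_lt_0_compat; nra. }
    exists N. intros n m Hn Hm. unfold R_dist.
    assert (Hb : forall p, (N <= p)%nat -> Rabs (sum_f_R0 a p - sum_f_R0 a N) < eps / 2).
    { intros p Hp. replace p with ((p - N) + N)%nat by lia.
      eapply Rle_lt_trans; [apply (tail_bound a K g Hg Ha)|].
      specialize (HN (S N) ltac:(lia)).
      assert (0 <= g ^ S N) by (apply pow_le; lra).
      apply (Rmult_lt_compat_l (K+1)) in HN; [|lra].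
      replace ((K + 1) * (eps * (1 - g) / (2 * (K + 1)))) with (eps * (1 - g) / 2) in HN
        by (field; lra).
      apply (Rmult_lt_reg_r (1 - g)); [lra|].
      replace (K * g ^ S N / (1 - g) * (1 - g)) with (K * g ^ S N) by (field; lra).
      nra. }
    pose proof (Hb n Hn). pose proof (Hb m Hm).
    replace (sum_f_R0 a n - sum_f_R0 a m) with
      ((sum_f_R0 a n - sum_f_R0 a N) - (sum_f_R0 a m - sum_f_R0 a N)) by ring.
    eapply Rle_lt_trans; [apply Rabs_triang|]. rewrite Rabs_Ropp. lra. }
  destruct (R_complete _ Hc) as [l Hl]. exists l; exact Hl.
Qed.

Lemma cv_shift (u : nat -> R) l n : Un_cv u l -> Un_cv (fun N => u (N + n)%nat) l.
Proof.
  intros H eps He. destruct (H eps He) as [N HN]. exists N. intros m Hm.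
  apply HN. lia.
Qed.

Lemma cv_abs_le (u : nat -> R) l B : Un_cv u l -> (forall n, Rabs (u n) <= B) -> Rabs l <= B.
Proof.
  intros H Hb. apply Rabs_le. split.
  - apply (@Rle_cv_lim (fun _ => - B) u (-B) l); auto.
    + intros n. specialize (Hb n). pose proof (Rle_abs (u n)); pose proof (Rle_abs (- u n)); rewrite Rabs_Ropp in *; lra.
    + intros e He; exists 0%nat; intros; unfold R_dist. replace (-B - - B) with 0 by ring.
      rewrite Rabs_R0; auto.
  - apply (@Rle_cv_lim u (fun _ => B) l B); auto.
    + intros n. specialize (Hb n). pose proof (Rle_abs (u n)); pose proof (Rle_abs (- u n)); rewrite Rabs_Ropp in *; lra.
    + intros e He; exists 0%nat; intros; unfold R_dist. replace (B - B) with 0 by ring.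
      rewrite Rabs_R0; auto.
Qed.

Lemma tail_lim (a : nat -> R) K g l : 0 <= g < 1 ->
  (forall m, Rabs (a m) <= K * g^m) -> Un_cv (sum_f_R0 a) l -> forall n,
  Rabs (l - sum_f_R0 a n) <= K * g^(S n) / (1 - g).
Proof.
  intros Hg Ha Hl n.
  apply (cv_abs_le (fun N => sum_f_R0 a (N + n) - sum_f_R0 a n)).
  - apply CV_minus. apply cv_shift; auto.
    intros e He; exists 0%nat; intros; unfold R_dist. replace (sum_f_R0 a n - sum_f_R0 a n) with 0 by ring.
      rewrite Rabs_R0; auto.
  - intros N. apply tail_bound; auto.
Qed.

Lemma total_bound (a : nat -> R) K g l : 0 <= g < 1 ->
  (forall m, Rabs (a m) <= K * g^m) -> Un_cv (sum_f_R0 a) l -> Rabs l <= K / (1 - g).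
Proof.
  intros Hg Ha Hl. pose proof (tail_lim a K g l Hg Ha Hl 0%nat) as H.
  simpl in H. pose proof (Ha 0%nat) as H0. simpl in H0.
  replace l with ((l - a 0%nat) + a 0%nat) by ring.
  eapply Rle_trans; [apply Rabs_triang|].
  replace (K / (1 - g)) with (K * (g * 1) / (1 - g) + K * 1) by (field; lra). lra.
Qed.

From mathcomp Require Import all_boot.
From HB Require Import structures.
From mathcomp Require Import zify.
From Coquelicot Require Compactness.
Local Open Scope R_scope.

HB.instance Definition Rplus_law := Monoid.isComLaw.Build R 0 Rplus
  (fun x y z => esym (Rplus_assoc x y z)) Rplus_comm Rplus_0_l.



Definition valn (b : nat) (i : nat -> 'I_b) (n : nat) : nat :=
  (\sum_(k < n) (i k) * b ^ k)%N.

Lemma INR_expn (b n : nat) : INR (b ^ n)%N = INR b ^ n.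
Proof.
  elim: n => [|n IH] //. by rewrite expnS /= mult_INR IH.
Qed.

Lemma big_val (b : nat) (i : nat -> 'I_b) n :
  \big[Rplus/0]_(k < n) (digit (i k) * INR b ^ k) = INR (valn b i n).
Proof.
  rewrite /valn. elim: n => [|n IH].
  - by rewrite !big_ord0.
  - rewrite big_ord_recr [in RHS]big_ord_recr /= plus_INR mult_INR INR_expn -IH. reflexivity.
Qed.

Lemma partial_val b x i n : partial_pt b x i n = x + INR (valn b i n).
Proof. by rewrite /partial_pt big_val. Qed.

Lemma valn_S b i n : valn b i n.+1 = (valn b i n + i n * b ^ n)%N.
Proof. by rewrite /valn big_ord_recr. Qed.

Lemma valn_bound b i n : (valn b i n < b ^ n)%N.
Proof.
  elim: n => [|n IH].
  - by rewrite /valn big_ord0 expn0.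
  - rewrite valn_S expnS.
    have H1 : (i n < b)%N by apply ltn_ord.
    have H2 : (i n <= b.-1)%N by lia.
    have H3 : (i n * b ^ n <= b.-1 * b ^ n)%N by apply leq_mul.
    have H4 : (b.-1 * b ^ n + b ^ n = b * b ^ n)%N.
    { have -> : b = (b.-1).+1 by lia. by rewrite mulSn addnC. }
    lia.
Qed.

Lemma INR_valn_le b i n : INR (valn b i n) <= INR b ^ n - 1.
Proof.
  have H := valn_bound b i n. rewrite -INR_expn.
  have : (valn b i n + 1 <= b ^ n)%N by lia.
  move/leP => /le_INR. rewrite plus_INR /=. lra.
Qed.

Definition pt b (i : nat -> 'I_b) m y := (y + INR (valn b i m.+1)) / INR b ^ m.+1.
Definition Tm b g psi (i : nat -> 'I_b) m y := g ^ m * psi (pt b i m y).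
Definition Dm b g dpsi (i : nat -> 'I_b) m y := g ^ m * (dpsi (pt b i m y) / INR b ^ m.+1).

Lemma Sf_T b g psi y i : Sf b g psi y i = series (fun m => Tm b g psi i m y).
Proof.
  rewrite /Sf. f_equal. apply functional_extensionality => m.
  by rewrite /Tm /pt partial_val.
Qed.

Lemma Bpos b m : (2 <= b)%N -> 2 <= INR b ^ m.+1.
Proof.
  move=> Hb. have H2 : 2 <= INR b by (apply (le_INR 2); apply/leP).
  elim: m => [|m IH]. - simpl. lra.
  - change (INR b ^ m.+2) with (INR b * INR b ^ m.+1). nra.
Qed.

Lemma pt_range b i m y : (2 <= b)%N -> -3 < y < 3 -> -2 <= pt b i m y <= 2.
Proof.
  move=> Hb Hy. rewrite /pt. have HB := Bpos b m Hb.
  have Hv := INR_valn_le b i m.+1. have Hv0 := pos_INR (valn b i m.+1).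
  split.
  - apply (Rmult_le_reg_r (INR b ^ m.+1)); [lra|].
    rewrite /Rdiv Rmult_assoc Rinv_l; [|lra]. nra.
  - apply (Rmult_le_reg_r (INR b ^ m.+1)); [lra|].
    rewrite /Rdiv Rmult_assoc Rinv_l; [|lra]. nra.
Qed.

Lemma pt_diff b i m x y : (2 <= b)%N -> Rabs (pt b i m x - pt b i m y) <= Rabs (x - y).
Proof.
  move=> Hb. have HB := Bpos b m Hb. rewrite /pt.
  replace ((x + INR (valn b i m.+1)) / INR b ^ m.+1 - (y + INR (valn b i m.+1)) / INR b ^ m.+1)
    with ((x - y) * / INR b ^ m.+1) by (field; lra).
  rewrite Rabs_mult (Rabs_right (/ _)); [|left; apply Rinv_0_lt_compat; lra].
  have : / INR b ^ m.+1 <= 1 by (rewrite -Rinv_1; apply Rinv_le_contravar; lra).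
  have := Rabs_pos (x - y). nra.
Qed.

Lemma bounded_on (f : R -> R) : (forall x, continuity_pt f x) ->
  exists M, 0 <= M /\ forall x, -2 <= x <= 2 -> Rabs (f x) <= M.
Proof.
  move=> Hf.
  have Hc : forall c, -2 <= c <= 2 -> continuity_pt (fun x => Rabs (f x)) c.
  { move=> c _. apply (continuity_pt_comp f Rabs). apply Hf. apply Rcontinuity_abs. }
  have [Mx [HM _]] := continuity_ab_maj (fun x => Rabs (f x)) (-2) 2 ltac:(lra) Hc.
  exists (Rabs (f Mx)). split; [apply Rabs_pos|]. move=> x Hx. by apply HM.
Qed.

Lemma series_spec u : (exists l, Un_cv (sum_f_R0 u) l) -> Un_cv (sum_f_R0 u) (series u).
Proof.
  move=> H. rewrite /series. apply (epsilon_spec (inhabits 0) (fun l => infinite_sum u l)).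
  exact H.
Qed.

Lemma Tm_bound b g psi i m y M : (2 <= b)%N -> 0 <= g -> -3 < y < 3 ->
  (forall x, -2 <= x <= 2 -> Rabs (psi x) <= M) -> Rabs (Tm b g psi i m y) <= M * g ^ m.
Proof.
  move=> Hb Hg Hy HM. rewrite /Tm Rabs_mult Rabs_right; [|apply Rle_ge, pow_le; lra].
  rewrite Rmult_comm. apply Rmult_le_compat_r; [apply pow_le; lra|].
  apply HM, pt_range; auto.
Qed.

Lemma Dm_bound b g dpsi i m y M : (2 <= b)%N -> 0 <= g -> -3 < y < 3 -> 0 <= M ->
  (forall x, -2 <= x <= 2 -> Rabs (dpsi x) <= M) -> Rabs (Dm b g dpsi i m y) <= M * g ^ m.
Proof.
  move=> Hb Hg Hy HM0 HM. have HB := Bpos b m Hb.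
  rewrite /Dm Rabs_mult Rabs_right; [|apply Rle_ge, pow_le; lra].
  rewrite Rmult_comm. apply Rmult_le_compat_r; [apply pow_le; lra|].
  rewrite /Rdiv Rabs_mult (Rabs_right (/ _)); [|left; apply Rinv_0_lt_compat; lra].
  have : / INR b ^ m.+1 <= 1 by (rewrite -Rinv_1; apply Rinv_le_contravar; lra).
  have : 0 < / INR b ^ m.+1 by (apply Rinv_0_lt_compat; lra).
  have := HM _ (pt_range b i m y Hb Hy). have := Rabs_pos (dpsi (pt b i m y)). nra.
Qed.

Lemma affine_deriv c B y : B <> 0 -> derivable_pt_lim (fun y => (y + c) / B) y (/ B).
Proof.
  move=> HB eps He. exists (mkposreal 1 Rlt_0_1) => h Hh _.
  replace (((y + h + c) / B - (y + c) / B) / h - / B) with 0 by (field; auto).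
  by rewrite Rabs_R0.
Qed.

Lemma Tm_deriv b g psi dpsi i m y : (2 <= b)%N ->
  (forall x, derivable_pt_lim psi x (dpsi x)) ->
  derivable_pt_lim (Tm b g psi i m) y (Dm b g dpsi i m y).
Proof.
  move=> Hb Hd. have HB := Bpos b m Hb.
  have H1 := affine_deriv (INR (valn b i m.+1)) (INR b ^ m.+1) y ltac:(lra).
  have H2 := derivable_pt_lim_comp _ psi y _ _ H1 (Hd _).
  have H3 := derivable_pt_lim_scal _ (g ^ m) y _ H2.
  rewrite /Dm. replace (g ^ m * (dpsi (pt b i m y) / INR b ^ m.+1)) with
    (g ^ m * (dpsi ((y + INR (valn b i m.+1)) / INR b ^ m.+1) * / INR b ^ m.+1)) by reflexivity.
  exact H3.
Qed.

Lemma Dm_cont b g dpsi i m y : (2 <= b)%N -> (forall x, continuity_pt dpsi x) ->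
  continuity_pt (Dm b g dpsi i m) y.
Proof.
  move=> Hb Hc. have HB := Bpos b m Hb.
  have H1 := affine_deriv (INR (valn b i m.+1)) (INR b ^ m.+1) y ltac:(lra).
  have H1c : continuity_pt (fun y => (y + INR (valn b i m.+1)) / INR b ^ m.+1) y.
  { apply derivable_continuous_pt. exact (exist _ _ H1). }
  have H2 := continuity_pt_comp _ dpsi y H1c (Hc _).
  have H3 := continuity_pt_mult (fct_cte (g ^ m)) _ y (continuity_pt_const (fct_cte (g ^ m)) y (fun _ _ => erefl))
    (continuity_pt_mult _ (fct_cte (/ INR b ^ m.+1)) y H2 (continuity_pt_const (fct_cte (/ INR b ^ m.+1)) y (fun _ _ => erefl))).
  exact H3.
Qed.

Lemma Sf_cv b g psi dpsi i y : (2 <= b)%N -> 0 <= g < 1 ->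
  (forall x, derivable_pt_lim psi x (dpsi x)) -> -3 < y < 3 ->
  Un_cv (sum_f_R0 (fun m => Tm b g psi i m y)) (Sf b g psi y i).
Proof.
  move=> Hb Hg Hd Hy.
  have [M [HM0 HM]] : exists M, 0 <= M /\ forall x, -2 <= x <= 2 -> Rabs (psi x) <= M.
  { apply bounded_on => x. apply derivable_continuous_pt. exact (exist _ _ (Hd x)). }
  rewrite Sf_T. apply series_spec. apply (geom_cv _ M g Hg) => m.
  apply Tm_bound; auto; lra.
Qed.

Lemma Dm_cv b g dpsi i y : (2 <= b)%N -> 0 <= g < 1 ->
  (forall x, continuity_pt dpsi x) -> -3 < y < 3 ->
  Un_cv (sum_f_R0 (fun m => Dm b g dpsi i m y)) (series (fun m => Dm b g dpsi i m y)).
Proof.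
  move=> Hb Hg Hc Hy.
  have [M [HM0 HM]] := bounded_on dpsi Hc.
  apply series_spec. apply (geom_cv _ M g Hg) => m.
  apply Dm_bound; auto; lra.
Qed.

Lemma deriv_at_eq f x l : derivable_pt_lim f x l -> deriv_at f x = l.
Proof.
  move=> H. have H' : derivable_pt_lim f x (deriv_at f x).
  { rewrite /deriv_at. apply (epsilon_spec (inhabits 0) (fun l => derivable_pt_lim f x l)).
    by exists l. }
  exact (uniqueness_limite _ _ _ _ H' H).
Qed.

Lemma Sf'_formula b g psi dpsi i x : (2 <= b)%N -> 0 <= g < 1 ->
  (forall x, derivable_pt_lim psi x (dpsi x)) -> (forall x, continuity_pt dpsi x) ->
  -3 < x < 3 ->
  Un_cv (sum_f_R0 (fun m => Dm b g dpsi i m x)) (Sf' b g psi x i).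
Proof.
  move=> Hb Hg Hd Hc Hx.
  pose r := mkposreal 3 ltac:(lra).
  pose fn := fun n y => sum_f_R0 (fun m => Tm b g psi i m y) n.
  pose fn' := fun n y => sum_f_R0 (fun m => Dm b g dpsi i m y) n.
  pose gD := fun y => series (fun m => Dm b g dpsi i m y).
  have [Md [HMd0 HMd]] := bounded_on dpsi Hc.
  have Hball : forall y, Boule 0 r y -> -3 < y < 3.
  { move=> y. rewrite /Boule /= Rminus_0_r => H. apply Rabs_def2 in H. lra. }
  have H1 : Boule 0 r x by (rewrite /Boule /= Rminus_0_r; apply Rabs_def1; lra).
  have H2 : forall y n, Boule 0 r y -> derivable_pt_lim (fn n) y (fn' n y).
  { move=> y n _. elim: n => [|n IH].
    - rewrite /fn /fn' /=. apply Tm_deriv; auto.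
    - change (derivable_pt_lim (plus_fct (fn n) (Tm b g psi i n.+1)) y (fn' n y + Dm b g dpsi i n.+1 y)).
      apply derivable_pt_lim_plus; auto. apply Tm_deriv; auto. }
  have H3 : forall y, Boule 0 r y -> Un_cv (fun n => fn n y) (Sf b g psi y i).
  { move=> y Hy. apply Sf_cv with dpsi; auto. }
  have H4 : CVU fn' gD 0 r.
  { move=> eps He.
    have [N HN] := small_pow g (eps * (1 - g) / (Md + 1)) Hg ltac:(apply Rdiv_lt_0_compat; nra).
    exists N => n y Hn Hy.
    have Hcv := Dm_cv b g dpsi i y Hb Hg Hc (Hball y Hy).
    have Ht := tail_lim _ Md g _ Hg (fun m => Dm_bound b g dpsi i m y Md Hb ltac:(lra) (Hball y Hy) HMd0 HMd) Hcv n.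
    eapply Rle_lt_trans; [exact Ht|].
    have HN' := HN n.+1 ltac:(lia).
    have : 0 <= g ^ n.+1 by (apply pow_le; lra).
    move=> Hp.
    apply (Rmult_lt_reg_r (1 - g)); [lra|].
    replace (Md * g ^ n.+1 / (1 - g) * (1 - g)) with (Md * g ^ n.+1) by (field; lra).
    apply (Rmult_lt_compat_l (Md + 1)) in HN'; [|lra].
    replace ((Md + 1) * (eps * (1 - g) / (Md + 1))) with (eps * (1 - g)) in HN' by (field; lra).
    nra. }
  have H5 : forall y, Boule 0 r y -> continuity_pt gD y.
  { move=> y Hy. apply (CVU_continuity fn' gD 0 r H4); auto.
    move=> n z _. elim: n => [|n IH].
    - rewrite /fn' /=. apply Dm_cont; auto.
    - change (continuity_pt (plus_fct (fn' n) (Dm b g dpsi i n.+1)) z).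
      apply continuity_pt_plus; auto. apply Dm_cont; auto. }
  have Hder := derivable_pt_lim_CVU fn fn' (fun y => Sf b g psi y i) gD x 0 r H1 H2 H3 H4 H5.
  rewrite /Sf' (deriv_at_eq _ _ _ Hder). apply Dm_cv; auto.
Qed.

Lemma series_diff (a c : nat -> R) la lc K g : 0 <= g < 1 ->
  Un_cv (sum_f_R0 a) la -> Un_cv (sum_f_R0 c) lc ->
  (forall m, Rabs (a m - c m) <= K * g ^ m) -> Rabs (la - lc) <= K / (1 - g).
Proof.
  move=> Hg Ha Hc Hb. apply (total_bound (fun m => a m - c m) K g); auto.
  have -> : sum_f_R0 (fun m => a m - c m) = fun n => sum_f_R0 a n - sum_f_R0 c n.
  { apply functional_extensionality => n. apply minus_sum. }
  by apply CV_minus.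
Qed.

Lemma equicont b g psi dpsi : (2 <= b)%N -> 0 <= g < 1 ->
  (forall x, derivable_pt_lim psi x (dpsi x)) -> (forall x, continuity_pt dpsi x) ->
  forall eps, 0 < eps -> exists r, 0 < r /\ forall x y, -1 <= x <= 2 -> -1 <= y <= 2 ->
    Rabs (x - y) < r -> forall i,
    Rabs (Sf b g psi x i - Sf b g psi y i) <= eps /\
    Rabs (Sf' b g psi x i - Sf' b g psi y i) <= eps.
Proof.
  move=> Hb Hg Hd Hc eps He.
  have Hpc : forall x, -2 <= x <= 2 -> continuity_pt psi x.
  { move=> x _. apply derivable_continuous_pt. exact (exist _ _ (Hd x)). }
  have He1 : 0 < eps * (1 - g) by nra.
  have [d1 Hd1] := @Heine_cor2 psi (-2) 2 Hpc (mkposreal _ He1).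
  have [d2 Hd2] := @Heine_cor2 dpsi (-2) 2 (fun x _ => Hc x) (mkposreal _ He1).
  exists (Rmin d1 d2). split; [apply Rmin_pos; apply cond_pos|].
  move=> x y Hx Hy Hxy i.
  have Hx3 : -3 < x < 3 by lra. have Hy3 : -3 < y < 3 by lra.
  have Hp : forall m, Rabs (pt b i m x - pt b i m y) < Rmin d1 d2.
  { move=> m. eapply Rle_lt_trans; [apply pt_diff; auto|]. exact Hxy. }
  have Hp1 : forall m, Rabs (pt b i m x - pt b i m y) < d1.
  { move=> m. eapply Rlt_le_trans; [apply Hp| apply Rmin_l]. }
  have Hp2 : forall m, Rabs (pt b i m x - pt b i m y) < d2.
  { move=> m. eapply Rlt_le_trans; [apply Hp| apply Rmin_r]. }
  replace eps with (eps * (1 - g) / (1 - g)) by (field; lra).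
  split.
  - eapply (series_diff (fun m => Tm b g psi i m x) (fun m => Tm b g psi i m y) _ _ _ g Hg).
    + apply Sf_cv with dpsi; auto.
    + apply Sf_cv with dpsi; auto.
    + move=> m. rewrite /Tm -Rmult_minus_distr_l Rabs_mult Rabs_right; [|apply Rle_ge, pow_le; lra].
      rewrite Rmult_comm. apply Rmult_le_compat_r; [apply pow_le; lra|].
      left. apply (Hd1 _ _ (pt_range b i m x Hb Hx3) (pt_range b i m y Hb Hy3) (Hp1 m)).
  - eapply (series_diff (fun m => Dm b g dpsi i m x) (fun m => Dm b g dpsi i m y) _ _ _ g Hg).
    + apply (Sf'_formula b g psi dpsi); auto.
    + apply (Sf'_formula b g psi dpsi); auto.
    + move=> m. have HB := Bpos b m Hb.
      rewrite /Dm -Rmult_minus_distr_l Rabs_mult Rabs_right; [|apply Rle_ge, pow_le; lra].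
      rewrite Rmult_comm. apply Rmult_le_compat_r; [apply pow_le; lra|].
      have H := Hd2 _ _ (pt_range b i m x Hb Hx3) (pt_range b i m y Hb Hy3) (Hp2 m).
      simpl in H.
      replace (dpsi (pt b i m x) / INR b ^ m.+1 - dpsi (pt b i m y) / INR b ^ m.+1)
        with ((dpsi (pt b i m x) - dpsi (pt b i m y)) * / INR b ^ m.+1) by (field; lra).
      rewrite Rabs_mult (Rabs_right (/ _)); [|left; apply Rinv_0_lt_compat; lra].
      have : / INR b ^ m.+1 <= 1 by (rewrite -Rinv_1; apply Rinv_le_contravar; lra).
      have : 0 < / INR b ^ m.+1 by (apply Rinv_0_lt_compat; lra).
      have := Rabs_pos (dpsi (pt b i m x) - dpsi (pt b i m y)). nra.
Qed.

Fixpoint allmax b (i : nat -> 'I_b) n : bool :=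
  match n with 0 => true | n'.+1 => allmax b i n' && (i n' == b.-1 :> nat) end.
Fixpoint allzero b (i : nat -> 'I_b) n : bool :=
  match n with 0 => true | n'.+1 => allzero b i n' && (i n' == 0%N :> nat) end.

Definition succ b (hb : (0 < b)%N) (d : 'I_b) : 'I_b := Ordinal (ltn_pmod d.+1 hb).
Definition predo b (hb : (0 < b)%N) (d : 'I_b) : 'I_b := Ordinal (ltn_pmod (d + b.-1) hb).
Definition inc b hb (i : nat -> 'I_b) n := if allmax b i n then succ b hb (i n) else i n.
Definition dec b hb (i : nat -> 'I_b) n := if allzero b i n then predo b hb (i n) else i n.

Lemma inc_val b hb i n :
  (valn b (inc b hb i) n + allmax b i n * b ^ n = valn b i n + 1)%N.
Proof.
  elim: n => [|n IH].
  - by rewrite /valn !big_ord0 /= expn0.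
  - rewrite !valn_S expnS.
    have Hc : nat_of_ord (inc b hb i n) = if allmax b i n then ((i n).+1 %% b)%N else i n.
    { by rewrite /inc; case: (allmax b i n). }
    rewrite Hc /=.
    have Hin : (i n < b)%N by apply ltn_ord.
    move: IH. set V := valn b (inc b hb i) n. set W := valn b i n. set P := (b ^ n)%N.
    case Ha: (allmax b i n) => /= IH.
    + case: eqP => Hn /=.
      * have -> : ((i n).+1 %% b = 0)%N.
        { rewrite Hn. have -> : (b.-1).+1 = b by lia. by rewrite modnn. }
        rewrite Hn. have Hb1 : b = (b.-1).+1 by lia. rewrite [in (b * P)%N]Hb1. nia.
      * have -> : ((i n).+1 %% b = (i n).+1)%N by (rewrite modn_small //; lia).
        nia.
    + nia.
Qed.

Lemma allmax_dec b hb i n : allmax b (dec b hb i) n = allzero b i n.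
Proof.
  elim: n => [|n IH] //=. rewrite IH /dec.
  case Hz: (allzero b i n) => //=.
  have Hin : (i n < b)%N by apply ltn_ord.
  rewrite /predo /=. apply/eqP. case: eqP => H.
  - rewrite H add0n modn_small //. lia.
  - move=> Hm. apply: H. move: Hm.
    have Hb1 : b = (b.-1).+1 by lia.
    case: (ltnP (i n + b.-1) b) => Hlt.
    + rewrite modn_small // => ?. lia.
    + have -> : (i n + b.-1 = (i n).-1 + b)%N by lia.
      rewrite modnDr modn_small; lia.
Qed.

Lemma inc_dec b hb i n : inc b hb (dec b hb i) n = i n.
Proof.
  rewrite /inc allmax_dec /dec. case Hz: (allzero b i n) => //.
  apply: val_inj. rewrite /succ /predo /=.
  have Hin : (i n < b)%N by apply ltn_ord.
  have Hb1 : b = (b.-1).+1 by lia.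
  case: (posnP (i n)) => H0.
  - rewrite H0 add0n (modn_small (m := b.-1)); [|lia]. rewrite -Hb1 modnn. by [].
  - have -> : (i n + b.-1 = (i n).-1 + b)%N by lia.
    rewrite modnDr (modn_small (m := (i n).-1)); [|lia].
    rewrite modn_small; lia.
Qed.

Lemma allmax_loc b (i j : nat -> 'I_b) n : (forall m, (m < n)%N -> i m = j m) ->
  allmax b i n = allmax b j n.
Proof.
  elim: n => [|n IH] //= H. rewrite IH; [|move=> m Hm; apply H; lia].
  by rewrite H.
Qed.

Lemma inc_loc b hb (i j : nat -> 'I_b) n : (forall m, (m <= n)%N -> i m = j m) ->
  inc b hb i n = inc b hb j n.
Proof.
  move=> H. rewrite /inc (allmax_loc b i j n); [|move=> m Hm; apply H; lia].
  by rewrite H.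
Qed.

Lemma concat_lt b q (k : word b q) u n (H : (n < q)%N) : concat b q k u n = k (Ordinal H).
Proof.
  by rewrite /concat insubT.
Qed.

Lemma concat_ge b q (k : word b q) u n : (q <= n)%N -> concat b q k u n = u (n - q)%N.
Proof.
  move=> H. rewrite /concat insubF //. apply/negbTE. rewrite -leqNgt. exact H.
Qed.

Lemma word_dec b hb q (k' : word b q) : exists k : word b q, forall u : nat -> 'I_b,
  exists u', inc b hb (concat b q k u) = concat b q k' u'.
Proof.
  pose w0 := fun _ : nat => (Ordinal hb : 'I_b).
  exists [ffun j : 'I_q => dec b hb (concat b q k' w0) j] => u.
  exists (fun n => inc b hb (concat b q [ffun j : 'I_q => dec b hb (concat b q k' w0) j] u) (n + q)).
  apply functional_extensionality => n.
  case: (ltnP n q) => Hn.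
  - rewrite (concat_lt _ _ k' _ _ Hn).
    rewrite (inc_loc b hb _ (dec b hb (concat b q k' w0))).
    + by rewrite inc_dec (concat_lt _ _ k' _ _ Hn).
    + move=> m Hm. have Hmq : (m < q)%N by lia.
      by rewrite (concat_lt _ _ _ _ _ Hmq) ffunE.
  - rewrite (concat_ge _ _ k' _ _ Hn). f_equal. lia.
Qed.

Lemma dpsi_per psi dpsi : (forall x, psi (x + 1) = psi x) ->
  (forall x, derivable_pt_lim psi x (dpsi x)) -> forall x, dpsi (x + 1) = dpsi x.
Proof.
  move=> Hp Hd x.
  have H1 := affine_deriv 1 1 x ltac:(lra).
  have H2 := derivable_pt_lim_comp _ psi x _ _ H1 (Hd _).
  have Hf : Ranalysis1.comp psi (fun y => (y + 1) / 1) = psi.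
  { apply functional_extensionality => y. rewrite /Ranalysis1.comp Rdiv_1_r. apply Hp. }
  rewrite Hf Rdiv_1_r Rinv_1 Rmult_1_r in H2.
  exact (uniqueness_limite _ _ _ _ H2 (Hd x)).
Qed.

Lemma pt_shift b hb i m y :
  pt b i m (y + 1) = pt b (inc b hb i) m y + INR (allmax b i m.+1).
Proof.
  have HB : INR b ^ m.+1 <> 0.
  { apply pow_nonzero. have : (0 < b)%N := hb. move/ltP/lt_INR. simpl. lra. }
  have H := inc_val b hb i m.+1.
  have H' := f_equal INR H. rewrite !plus_INR mult_INR INR_expn in H'. change (INR 1) with 1 in H'.
  rewrite /pt. apply (Rmult_eq_reg_r (INR b ^ m.+1)); auto.
  rewrite Rmult_plus_distr_r /Rdiv !Rmult_assoc Rinv_l //. rewrite !Rmult_1_r. lra.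
Qed.

Lemma per_bool (f : R -> R) (c : bool) z : (forall x, f (x + 1) = f x) -> f (z + INR c) = f z.
Proof. move=> H. case: c => /=. apply H. by rewrite Rplus_0_r. Qed.

Lemma Sf_shift b hb g psi y i : (forall x, psi (x + 1) = psi x) ->
  Sf b g psi (y + 1) i = Sf b g psi y (inc b hb i).
Proof.
  move=> Hp. rewrite !Sf_T. f_equal. apply functional_extensionality => m.
  by rewrite /Tm (pt_shift b hb) per_bool.
Qed.

Lemma Sf'_shift b hb g psi dpsi y i : (2 <= b)%N -> 0 <= g < 1 ->
  (forall x, psi (x + 1) = psi x) ->
  (forall x, derivable_pt_lim psi x (dpsi x)) -> (forall x, continuity_pt dpsi x) ->
  -3 < y -> y + 1 < 3 ->
  Sf' b g psi (y + 1) i = Sf' b g psi y (inc b hb i).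
Proof.
  move=> Hb Hg Hp Hd Hc Hy1 Hy2.
  have H1 := Sf'_formula b g psi dpsi i (y + 1) Hb Hg Hd Hc ltac:(lra).
  have H2 := Sf'_formula b g psi dpsi (inc b hb i) y Hb Hg Hd Hc ltac:(lra).
  have Heq : (fun m => Dm b g dpsi i m (y + 1)) = (fun m => Dm b g dpsi (inc b hb i) m y).
  { apply functional_extensionality => m.
    rewrite /Dm (pt_shift b hb) per_bool //. apply (dpsi_per psi); auto. }
  rewrite Heq in H1. exact (UL_sequence _ _ _ H1 H2).
Qed.

Lemma E_ed_mono b g psi q x e d e' d' (k l : word b q) : e <= e' -> d <= d' ->
  E_ed b g psi q x e d k l -> E_ed b g psi q x e' d' k l.
Proof.
  move=> He Hd [u [v [H1 H2]]]. exists u, v. split; lra.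
Qed.

Lemma E_ed_sym b g psi q x e d (k l : word b q) :
  E_ed b g psi q x e d k l -> E_ed b g psi q x e d l k.
Proof.
  move=> [u [v [H1 H2]]]. exists v, u. split; by rewrite Rabs_minus_sym.
Qed.

Lemma E_ed_refl b (hb : (0 < b)%N) g psi q x e d (k : word b q) : 0 <= e -> 0 <= d ->
  E_ed b g psi q x e d k k.
Proof.
  move=> He Hd. exists (fun _ => Ordinal hb), (fun _ => Ordinal hb).
  rewrite /tangent !Rminus_diag Rabs_R0. split; lra.
Qed.

Lemma tri4 a a' c c' m : Rabs (a' - c') <= m / 2 -> Rabs (a - a') <= m / 4 ->
  Rabs (c' - c) <= m / 4 -> Rabs (a - c) <= m.
Proof.
  move=> H1 H2 H3. unfold Rabs in *.
  repeat match goal with |- context [Rcase_abs ?x] => destruct (Rcase_abs x) end;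
  repeat match goal with H : context [Rcase_abs ?x] |- _ => destruct (Rcase_abs x) end; lra.
Qed.

Definition Hyps b g psi dpsi : Prop :=
  (2 <= b)%N /\ 0 <= g < 1 /\ (forall x, psi (x + 1) = psi x) /\
  (forall x, derivable_pt_lim psi x (dpsi x)) /\ (forall x, continuity_pt dpsi x).

Lemma cont_transfer b g psi dpsi q : Hyps b g psi dpsi -> forall m, 0 < m ->
  exists r, 0 < r /\ forall x t (k l : word b q), -1 <= x <= 2 -> -1 <= t <= 2 ->
  Rabs (x - t) < r -> ~ E_ed b g psi q t m m k l -> ~ E_ed b g psi q x (m/2) (m/2) k l.
Proof.
  move=> [Hb [Hg [Hp [Hd Hc]]]] m Hm.
  have [r [Hr Hrr]] := equicont b g psi dpsi Hb Hg Hd Hc (m / 4) ltac:(lra).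
  exists r. split=> // x t k l Hx Ht Hxt Hn [u [v [H1 H2]]]. apply: Hn.
  exists u, v.
  have [A1 A2] := Hrr x t Hx Ht Hxt (concat b q k u).
  have [B1 B2] := Hrr x t Hx Ht Hxt (concat b q l v).
  rewrite Rabs_minus_sym in A1. rewrite Rabs_minus_sym in A2.
  split; apply (tri4 _ _ _ _ m H1 A1 B1) || apply (tri4 _ _ _ _ m H2 A2 B2).
Qed.

Lemma carry_transfer b (hb : (0 < b)%N) g psi dpsi q : Hyps b g psi dpsi ->
  forall (k' l' : word b q), exists k l : word b q, forall y m, -1 <= y <= 0 ->
  ~ E_ed b g psi q y m m k' l' -> ~ E_ed b g psi q (y + 1) m m k l.
Proof.
  move=> [Hb [Hg [Hp [Hd Hc]]]] k' l'.
  have [k Hk] := word_dec b hb q k'. have [l Hl] := word_dec b hb q l'.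
  exists k, l => y m Hy Hn [u [v [H1 H2]]]. apply: Hn.
  have [u' Hu] := Hk u. have [v' Hv] := Hl v.
  exists u', v'. rewrite /tangent -Hu -Hv.
  rewrite -!(Sf_shift b hb) //. rewrite -!(Sf'_shift b hb g psi dpsi) //; try lra.
Qed.

Lemma margin b g psi q t (k l : word b q) : ~ E b g psi q t k l ->
  exists m, 0 < m /\ ~ E_ed b g psi q t m m k l.
Proof.
  move=> Hn. apply NNPP => Hc. apply: Hn => eps delta He Hd.
  apply NNPP => Hn2. apply: Hc. exists (Rmin eps delta). split.
  - by apply Rmin_pos.
  - move=> H. apply: Hn2. apply: (E_ed_mono _ _ _ _ _ _ _ _ _ _ _ _ _ H).
    apply Rmin_l. apply Rmin_r.
Qed.

Lemma gauge b (hb : (0 < b)%N) g psi dpsi q : Hyps b g psi dpsi ->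
  (forall x, 0 <= x < 1 -> exists k l : word b q, ~ E b g psi q x k l) ->
  forall t, exists d, 0 < d /\ (0 <= t <= 1 -> forall x, 0 <= x < 1 -> Rabs (x - t) < d ->
     exists k l : word b q, ~ E_ed b g psi q x d d k l).
Proof.
  move=> HH HE t.
  case: (Rle_lt_dec 1 t) => Ht1.
  - have [k' [l' Hkl]] := HE 0 ltac:(lra).
    have [m [Hm Hnm]] := margin _ _ _ _ _ _ _ Hkl.
    have [r [Hr Hrr]] := cont_transfer b g psi dpsi q HH m Hm.
    have [k [l Hc]] := carry_transfer b hb g psi dpsi q HH k' l'.
    exists (Rmin r (m / 2)). split; [apply Rmin_pos; lra|].
    move=> Ht x Hx Hxt. exists k, l.
    have Ht' : t = 1 by lra. subst t.
    have Hd1 := Rmin_l r (m / 2). have Hd2 := Rmin_r r (m / 2).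
    have Hy : Rabs ((x - 1) - 0) < r.
    { rewrite Rminus_0_r. lra. }
    have H1 := Hrr (x - 1) 0 k' l' ltac:(lra) ltac:(lra) Hy Hnm.
    have H2 := Hc (x - 1) (m / 2) ltac:(split; [|lra]; have := Rabs_def2 _ _ Hxt; lra) H1.
    replace (x - 1 + 1) with x in H2 by ring.
    move=> HE2. apply: H2. apply: (E_ed_mono _ _ _ _ _ _ _ _ _ _ _ _ _ HE2); lra.
  - case: (Rlt_le_dec t 0) => Ht0.
    + exists 1. split; [lra|]. move=> ?. lra.
    + have [k [l Hkl]] := HE t ltac:(lra).
      have [m [Hm Hnm]] := margin _ _ _ _ _ _ _ Hkl.
      have [r [Hr Hrr]] := cont_transfer b g psi dpsi q HH m Hm.
      exists (Rmin r (m / 2)). split; [apply Rmin_pos; lra|].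
      move=> Ht x Hx Hxt. exists k, l.
      have Hd1 := Rmin_l r (m / 2). have Hd2 := Rmin_r r (m / 2).
      have H1 := Hrr x t k l ltac:(lra) ltac:(lra) ltac:(lra) Hnm.
      move=> HE2. apply: H1. apply: (E_ed_mono _ _ _ _ _ _ _ _ _ _ _ _ _ HE2); lra.
Qed.

Lemma uniform_margin b (hb : (0 < b)%N) g psi dpsi q : Hyps b g psi dpsi ->
  (forall x, 0 <= x < 1 -> exists k l : word b q, ~ E b g psi q x k l) ->
  exists d, 0 < d /\ forall x, 0 <= x < 1 -> exists k l : word b q, ~ E_ed b g psi q x d d k l.
Proof.
  move=> HH HE.
  have G := gauge b hb g psi dpsi q HH HE.
  pose dl := fun t => proj1_sig (constructive_indefinite_description _ (G t)).
  have Hdl : forall t, 0 < dl t /\ (0 <= t <= 1 -> forall x, 0 <= x < 1 -> Rabs (x - t) < dl t ->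
     exists k l : word b q, ~ E_ed b g psi q x (dl t) (dl t) k l).
  { move=> t. exact (proj2_sig (constructive_indefinite_description _ (G t))). }
  pose delta := fun t => mkposreal (dl t) (proj1 (Hdl t)).
  have [d Hd] := Compactness.compactness_value_1d 0 1 delta.
  exists d. split; [apply cond_pos|].
  move=> x Hx. apply NNPP => Hn. apply: (Hd x ltac:(lra)) => [[t [Ht [Hxt Hdt]]]].
  apply: Hn. simpl in Hxt, Hdt.
  have [k [l Hkl]] := proj2 (Hdl t) Ht x Hx Hxt.
  exists k, l => HE2. apply: Hkl. apply: (E_ed_mono _ _ _ _ _ _ _ _ _ _ _ _ _ HE2); lra.
Qed.

Lemma iter_plus n C : iter n (Rplus C) 0 = INR n * C.
Proof.
  elim: n => [|n IH] /=. - ring.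
  - rewrite IH. destruct n; simpl; ring.
Qed.

Lemma sum_const (T : finType) C : \big[Rplus/0]_(v : T) C = INR #|T| * C.
Proof. by rewrite big_const iter_plus. Qed.

Lemma sum3 (T : finType) (k l : T) (F : T -> R) A B C : k != l -> F k = A -> F l = B ->
  (forall v, v != k -> v != l -> F v = C) ->
  \big[Rplus/0]_(v : T) F v = A + B + (INR #|T| - 2) * C.
Proof.
  move=> Hkl HA HB HC.
  have Hlk : l != k by rewrite eq_sym.
  have E1 : \big[Rplus/0]_(v : T) F v =
            F k + (F l + \big[Rplus/0]_(v | (true && (v != k)) && (v != l)) F v).
  { rewrite (bigD1 k) //. by rewrite (bigD1 l). }
  have E2 : \big[Rplus/0]_(v : T) C =
            C + (C + \big[Rplus/0]_(v | (true && (v != k)) && (v != l)) C).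
  { rewrite (bigD1 k) //. by rewrite (bigD1 l). }
  have E3 : \big[Rplus/0]_(v | (true && (v != k)) && (v != l)) F v =
            \big[Rplus/0]_(v | (true && (v != k)) && (v != l)) C.
  { apply eq_bigr => v /andP [/andP [_ H1] H2]. by apply HC. }
  rewrite sum_const in E2. rewrite E1 E3 HA HB. lra.
Qed.

Definition W b q (al : R) (k l u v : word b q) : R :=
  if (u == k) || (u == l) then (if v == u then 1 else if (v == k) || (v == l) then 0 else al)
  else (if (v == k) || (v == l) then / al else 1).

Lemma W_nonneg b q al k l u v : 0 < al -> 0 <= W b q al k l u v.
Proof.
  move=> Ha. have := Rinv_0_lt_compat _ Ha. rewrite /W.
  repeat case: ifP => _; lra.
Qed.

Lemma W_prod b q al (k l u v : word b q) : 1 < al ->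
  ~ (u = k /\ v = l) -> ~ (u = l /\ v = k) -> 1 <= W b q al k l u v * W b q al k l v u.
Proof.
  move=> Ha H1 H2. have Hi : al * / al = 1 by (field; lra).
  have Hi' : / al * al = 1 by (field; lra).
  rewrite /W.
  case Hu: ((u == k) || (u == l)); case Hv: ((v == k) || (v == l)).
  - case: (eqVneq v u) => [Heq|Hvu]. + subst. lra.
    + exfalso.
      move: Hu Hv Hvu => /orP [/eqP Hu|/eqP Hu] /orP [/eqP Hv|/eqP Hv] Hvu; subst.
      * by rewrite eqxx in Hvu.
      * tauto.
      * tauto.
      * by rewrite eqxx in Hvu.
  - have Hvu : (v == u) = false by (apply/eqP => E; rewrite E Hu in Hv).
    rewrite Hvu. lra.
  - have Huv : (u == v) = false by (apply/eqP => E; rewrite E Hv in Hu).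
    rewrite Huv. lra.
  - lra.
Qed.

Lemma W_row b q al (k l u : word b q) : k != l ->
  \big[Rplus/0]_(v : word b q) W b q al k l u v =
  if (u == k) || (u == l) then 1 + (INR (b ^ q)%N - 2) * al
  else / al + / al + (INR (b ^ q)%N - 2) * 1.
Proof.
  move=> Hkl. case Hu: ((u == k) || (u == l)).
  - pose o := if u == k then l else k.
    have Huo : u != o.
    { rewrite /o. case: (eqVneq u k) => [->|Huk] //=. }
    have HP : forall v, ((v == k) || (v == l)) = ((v == u) || (v == o)).
    { move=> v. rewrite /o. move: Hu. case: (eqVneq u k) => [->|Huk] //= /eqP ->.
      by rewrite orbC. }
    rewrite (sum3 _ u o _ 1 0 al Huo).
    + rewrite card_ffun !card_ord. ring.
    + by rewrite /W Hu eqxx.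
    + rewrite /W Hu. rewrite (eq_sym o u) (negbTE Huo) HP eqxx orbT. by [].
    + move=> v Hv1 Hv2. rewrite /W Hu (negbTE Hv1) HP (negbTE Hv1) (negbTE Hv2). by [].
  - rewrite (sum3 _ k l _ (/ al) (/ al) 1 Hkl).
    + by rewrite card_ffun !card_ord.
    + by rewrite /W Hu eqxx.
    + by rewrite /W Hu eqxx orbT.
    + move=> v Hv1 Hv2. by rewrite /W Hu (negbTE Hv1) (negbTE Hv2).
Qed.

Definition idx (M : nat) (x : R) : nat := Z.to_nat (Int_part (INR M * x)).

Lemma idx_spec M x : 0 <= x -> INR (idx M x) <= INR M * x < INR (idx M x) + 1.
Proof.
  move=> Hx. have [H1 H2] := base_Int_part (INR M * x).
  have HM := pos_INR M.
  have Hp : (0 <= Int_part (INR M * x))%Z.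
  { have H0 : 0 <= INR M * x by nra.
    have : (-1 < Int_part (INR M * x))%Z by (apply lt_IZR; simpl; lra).
    lia. }
  rewrite /idx INR_IZR_INZ Z2Nat.id //. lra.
Qed.

Lemma idx_lt M x : (0 < M)%N -> 0 <= x < 1 -> (idx M x < M)%N.
Proof.
  move=> HM Hx. have [H1 H2] := idx_spec M x (proj1 Hx).
  have HM' : 0 < INR M by (apply lt_0_INR; apply/ltP).
  have : INR (idx M x) < INR M by nra.
  move/INR_lt/ltP. done.
Qed.

Lemma idx_eq M x (j : nat) : 0 <= x -> INR j <= INR M * x < INR j + 1 -> idx M x = j.
Proof.
  move=> Hx Hj. have [H1 H2] := idx_spec M x Hx.
  have A : INR (idx M x) < INR j + 1 by lra.
  have B : INR j < INR (idx M x) + 1 by lra.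
  rewrite -S_INR in A. rewrite -S_INR in B. apply INR_lt in A. apply INR_lt in B. lia.
Qed.

Lemma half_sum N : sum_f_R0 (fun n => (/ 2) ^ n) N = 2 - (/ 2) ^ N.
Proof.
  elim: N => [|N IH] /=. - lra.
  - rewrite IH. lra.
Qed.

Lemma null_countable (g : nat -> R) : null_set (fun x => exists n, x = g n).
Proof.
  move=> eps He.
  exists (fun n => g n - eps / 4 * (/ 2) ^ n), (fun n => g n + eps / 4 * (/ 2) ^ n).
  have Hp : forall n, 0 < (/ 2) ^ n by (move=> n; apply pow_lt; lra).
  split; [move=> n; have := Hp n; nra|].
  split.
  - move=> x [n ->]. exists n. have := Hp n. split; nra.
  - move=> N.
    have -> : sum_f_R0 (fun n => g n + eps / 4 * (/ 2) ^ n - (g n - eps / 4 * (/ 2) ^ n)) N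
              = eps / 2 * sum_f_R0 (fun n => (/ 2) ^ n) N.
    { elim: N => [|N IH]; cbn [sum_f_R0]. - field. - rewrite IH. field. }
    rewrite half_sum. have := Hp N. nra.
Qed.

Lemma null_sub (A B : R -> Prop) : null_set B -> (forall x, A x -> B x) -> null_set A.
Proof.
  move=> HB HAB eps He. have [a [c [H1 [H2 H3]]]] := HB eps He.
  exists a, c. split=> //. split=> // x Hx. by apply H2, HAB.
Qed.

Lemma div_le a M x : 0 < M -> a <= M * x -> a / M <= x.
Proof.
  move=> HM H. replace x with ((M * x) / M) by (field; lra).
  apply Rmult_le_compat_r; [left; apply Rinv_0_lt_compat; lra|lra].
Qed.

Lemma div_lt a M x : 0 < M -> M * x < a -> x < a / M.
Proof.
  move=> HM H. replace x with ((M * x) / M) by (field; lra).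
  apply Rmult_lt_compat_r; [apply Rinv_0_lt_compat; lra|lra].
Qed.

Lemma lt_div a M x : 0 < M -> a / M < x -> a < M * x.
Proof.
  move=> HM H. replace a with (M * (a / M)) by (field; lra).
  apply Rmult_lt_compat_l; lra.
Qed.

Lemma div_lt' a M x : 0 < M -> x < a / M -> M * x < a.
Proof.
  move=> HM H. replace a with (M * (a / M)) by (field; lra).
  apply Rmult_lt_compat_l; lra.
Qed.

Lemma step_meas (M : nat) (F : nat -> R) (f : R -> R) : (0 < M)%N ->
  (forall x, 0 <= x < 1 -> f x = F (idx M x)) -> measurable01 f.
Proof.
  move=> HM Hf c.
  have HM' : 0 < INR M by (apply lt_0_INR; apply/ltP).
  pose An := fun n : nat => if (Rlt_dec c (F n)) then
    (if (n < M)%N then (fun x => INR n / INR M < x < INR n.+1 / INR M) else (fun x => 0 < x < 0))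
    else (fun x => 0 < x < 0).
  exists (fun x => exists n, An n x), (fun x => exists n : nat, x = INR n / INR M).
  split; [|split; [apply null_countable|]].
  - apply borel_union => n. rewrite /An.
    destruct (Rlt_dec c (F n)); [destruct (n < M)%N|]; apply borel_interval.
  - move=> x H. case: H => [[HA HnB]|[HB HnA]].
    + case: HA => [Hx Hc].
      exists (idx M x). apply NNPP => Hne. apply: HnB. exists (idx M x).
      have [H1 H2] := idx_spec M x (proj1 Hx).
      rewrite /An. rewrite Hf // in Hc.
      destruct (Rlt_dec c (F (idx M x))) as [Hcj|Hn']; [|exfalso; exact (Hn' Hc)]. rewrite (idx_lt M x HM Hx).
      rewrite S_INR. split.
      * have : INR (idx M x) / INR M <= x.
        { apply div_le; lra. }
        move=> H3. destruct (Rle_lt_or_eq _ _ H3) as [H4|H4]; [exact H4|]. by case: Hne.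
      * apply div_lt; lra.
    + case: HB => [n Hn]. exfalso. apply: HnA. move: Hn. rewrite /An.
      destruct (Rlt_dec c (F n)) as [Hcn|Hcn]; simpl; [|move=> [? ?]; lra].
      case HnM: (n < M)%N; simpl; [|move=> [? ?]; lra].
      move=> [Hx1 Hx2]. change (x < INR n.+1 / INR M) in Hx2.
      have Hn0 := pos_INR n.
      have HnM' : INR n + 1 <= INR M by (rewrite -S_INR; apply le_INR; apply/leP).
      have Hx1' : INR n < INR M * x.
      { apply lt_div; lra. }
      have Hx2' : INR M * x < INR n + 1.
      { apply div_lt'; [lra|]. rewrite -S_INR. exact Hx2. }
      have Hx : 0 <= x < 1.
      { split; [nra|]. nra. }
      split=> //. rewrite Hf // (idx_eq M x n) //; lra.
Qed.

Theorem lemma2p6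
  (b : nat) (Hb : (2 <= b)%N)
  (gamma : R) (Hgamma : / INR b < gamma < 1)
  (psi dpsi : R -> R)
  (Hper : forall x, psi (x + 1) = psi x)
  (Hderiv : forall x, derivable_pt_lim psi x (dpsi x))
  (Hcont : continuity dpsi)
  (q : nat) (Hq : (1 <= q)%N) (Hbq : (2 <= b ^ q)%N)
  (HE : forall x, 0 <= x < 1 ->
        exists k l : word b q, ~ E b gamma psi q x k l)
  (alpha : R) (Halpha : 1 < alpha)
  (Heq : 2 - alpha = (INR (b ^ q) - 2) * alpha * (alpha - 1)) :
  sigma_le b gamma psi q (INR (b ^ q) - 2 + 2 / alpha).
Proof.
  move=> eta Heta.
  have hb : (0 < b)%N by lia.
  have Hb2 : 2 <= INR b by (apply (le_INR 2); apply/leP).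
  have Hg0 : 0 <= gamma.
  { have : 0 < / INR b by (apply Rinv_0_lt_compat; lra). lra. }
  have HH : Hyps b gamma psi dpsi.
  { split; [exact Hb|split; [lra|split; [exact Hper|split; [exact Hderiv|exact Hcont]]]]. }
  have HN : 2 <= INR (b ^ q) by (apply (le_INR 2); apply/leP).
  have [d [Hd Hud]] := uniform_margin b hb gamma psi dpsi q HH HE.
  have [r [Hr Hrr]] := cont_transfer b gamma psi dpsi q HH d Hd.
  have [M [HM1 HM2]] := archimed_cor1 r Hr.
  have HMp : (0 < M)%N by apply/ltP.
  have HMR : 0 < INR M by (apply lt_0_INR).
  pose w0 : word b q := [ffun _ => Ordinal hb].
  have Hp : forall j, exists p : word b q * word b q,
      (j < M)%N -> ~ E_ed b gamma psi q (INR j / INR M) d d p.1 p.2.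
  { move=> j. case: (ltnP j M) => Hj.
    - have Hx : 0 <= INR j / INR M < 1.
      { have Hj' : INR j.+1 <= INR M by (apply le_INR; apply/leP).
        rewrite S_INR in Hj'. have := pos_INR j. split.
        + apply Rmult_le_pos; [lra|left; apply Rinv_0_lt_compat; lra].
        + apply (Rmult_lt_reg_r (INR M)); [lra|].
          rewrite /Rdiv Rmult_assoc Rinv_l; lra. }
      have [k [l H]] := Hud _ Hx. by exists (k, l).
    - exists (w0, w0) => H. lia. }
  pose pf := fun j => proj1_sig (constructive_indefinite_description _ (Hp j)).
  have Hpf : forall j, (j < M)%N -> ~ E_ed b gamma psi q (INR j / INR M) d d (pf j).1 (pf j).2.
  { move=> j. exact (proj2_sig (constructive_indefinite_description _ (Hp j))). }
  have Key : forall x, 0 <= x < 1 ->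
      ~ E_ed b gamma psi q x (d / 2) (d / 2) (pf (idx M x)).1 (pf (idx M x)).2.
  { move=> x Hx. have Hj := idx_lt M x HMp Hx.
    have [H1 H2] := idx_spec M x (proj1 Hx).
    have Hj' : INR (idx M x).+1 <= INR M by (apply le_INR; apply/leP).
    rewrite S_INR in Hj'. have Hj0 := pos_INR (idx M x).
    have Ht1 : INR (idx M x) / INR M <= x by (apply div_le; lra).
    have Ht2 : INR (idx M x) / INR M < 1.
    { apply (Rmult_lt_reg_r (INR M)); [lra|]. rewrite /Rdiv Rmult_assoc Rinv_l; lra. }
    have Ht0 : 0 <= INR (idx M x) / INR M.
    { apply Rmult_le_pos; [lra|left; apply Rinv_0_lt_compat; lra]. }
    have Hxt : Rabs (x - INR (idx M x) / INR M) < r.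
    { rewrite Rabs_right; [|lra].
      apply Rle_lt_trans with (/ INR M); [|exact HM1].
      have : x < (INR (idx M x) + 1) / INR M by (apply div_lt; lra).
      have : (INR (idx M x) + 1) / INR M = INR (idx M x) / INR M + / INR M by (field; lra).
      lra. }
    apply (Hrr x (INR (idx M x) / INR M)); try lra.
    by apply Hpf. }
  have Kneq : forall x, 0 <= x < 1 -> (pf (idx M x)).1 != (pf (idx M x)).2.
  { move=> x Hx. apply/eqP => Heq'. apply: (Key x Hx). rewrite -Heq'.
    apply E_ed_refl; auto; lra. }
  pose V := fun x (u v : word b q) => W b q alpha (pf (idx M x)).1 (pf (idx M x)).2 u v.
  exists (fun _ => 1), V.
  split; [|split].
  - split; [apply (step_meas M (fun _ => 1)); auto|split].
    + move=> x _. lra.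
    + exists 1 => x _. rewrite Rinv_1. lra.
  - split; [|split].
    + move=> u v. apply (step_meas M (fun j => W b q alpha (pf j).1 (pf j).2 u v)); auto.
    + move=> x u v _. apply W_nonneg. lra.
    + exists (d / 2), (d / 2). split; [lra|split; [lra|]].
      move=> x u v Hx HEuv. apply W_prod; [lra| |].
      * move=> [Hu Hv]. apply: (Key x Hx). by rewrite -Hu -Hv.
      * move=> [Hu Hv]. apply: (Key x Hx). apply E_ed_sym. by rewrite -Hu -Hv.
  - apply (null_sub _ (fun x => exists n : nat, x = 0) (null_countable (fun _ => 0))).
    move=> x [Hx Hlt]. exfalso.
    have Hc0 : 0 <= INR (b ^ q) - 2 + 2 / alpha.
    { have : 0 < 2 / alpha by (apply Rdiv_lt_0_compat; lra). lra. }
    have Hrow : forall u : word b q,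
      1 / 1 * \big[Rplus/0]_(v : word b q) V x u v <= INR (b ^ q) - 2 + 2 / alpha.
    { move=> u. rewrite /V (W_row b q alpha _ _ u (Kneq x Hx)).
      have E0 : 2 - alpha - (INR (b ^ q) - 2) * alpha * (alpha - 1) = 0 by lra.
      case: ifP => _.
      - replace (INR (b ^ q) - 2 + 2 / alpha) with
          (1 + (INR (b ^ q) - 2) * alpha + (2 - alpha - (INR (b ^ q) - 2) * alpha * (alpha - 1)) / alpha)
          by (field; lra).
        rewrite E0 /Rdiv Rmult_0_l Rinv_1. lra.
      - replace (2 / alpha) with (/ alpha + / alpha) by (field; lra).
        rewrite /Rdiv Rinv_1. lra. }
    have : Sigma b q V (fun _ => 1) x <= INR (b ^ q) - 2 + 2 / alpha.
    { rewrite /Sigma. apply big_ind.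
      - exact Hc0.
      - move=> a c Ha Hc. by apply Rmax_lub.
      - move=> u _. apply Hrow. }
    lra.
Qed.
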